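(* Let $N>2$, $1<p<N$, and assume (H1)–(H4). For $a>0$ let $v_a$ be the solution on $[0,T]$ of $$(|v'(t)|^{p-2}v'(t))'+h(t)f(v(t))=0,\qquad v(0)=0,\ v'(0)=a.$$ Then for all sufficiently large $a$, $v_a$ has a first local maximum $M_a\in(0,T)$ (i.e. $v_a'(M_a)=0$ and $v_a'>0$ on $[0,M_a)$), and $M_a\to 0$ and $v_a(M_a)\to\infty$ as $a\to\infty$.
   Context: Standing hypotheses. $f:\mathbb{R}\setminus\{0\}\to\mathbb{R}$ is odd and locally Lipschitz, and: (H1) there is a locally Lipschitz $g_1:\mathbb{R}\to\mathbb{R}$ and $l>p-1$ with $f(u)=|u|^{l-1}u+g_1(u)$ for all large $|u|$, and $\lim_{u\to\infty}|g_1(u)|/|u|^l=0$; (H2) there is a locally Lipschitz $g_2:\mathbb{R}\to\mathbb{R}$ with $g_2(0)=0$ and $0<m<1$ such that $f(u)=-\frac{1}{|u|^{m-1}u}+g_2(u)$ for all small $|u|\neq 0$; (H3) $f$ has a unique positive zero $\beta$, with $f<0$ on $(0,\beta)$ and $f>0$ on $(\beta,\infty)$; (H4) $K>0$ and $K'$ are continuous on $[R,\infty)$ (for a fixed $R>0$), $\frac{rK'(r)}{K(r)}>-\frac{(N-1)p}{p-1}$ on $[R,\infty)$, and there are constants $K_0,K_1>0$ with $\frac{K_0}{r^{\alpha}}\le K(r)\le \frac{K_1}{r^{\alpha_1}}$ on $[R,\infty)$, where $N+\frac{m(N-p)}{p-1}<\alpha_1\le\alpha<2(N-1)$. Notation: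 $T=R^{\frac{p-N}{p-1}}$ and, for $0<t\le T$, $h(t)=\left(\frac{N-p}{p-1}\right)^{-p}t^{\frac{p(N-1)}{p-N}}K\!\left(t^{\frac{p-1}{p-N}}\right)>0$. A solution of the initial value problem on an interval $[0,d]$ means $v\in C^1[0,d]$ such that $t\mapsto h(t)f(v(t))$ is integrable on $(0,t)$ for each $t\le d$ and $|v'(t)|^{p-2}v'(t)=a^{p-1}-\int_0^t h(s)f(v(s))\,ds$, $v(0)=0$; it exists uniquely on $[0,T]$ for each $a>0$. *)

(* Defs.v *)
From HB Require Import structures.
From mathcomp Require Import all_boot all_order all_algebra.
From mathcomp Require Import all_classical all_reals all_analysis.
Set Implicit Arguments. Unset Strict Implicit. Unset Printing Implicit Defensive.
Import Order.TTheory GRing.Theory Num.Theory.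
Import numFieldNormedType.Exports.
Local Open Scope classical_set_scope.
Local Open Scope ring_scope.

Section Defs.
Variable R : realType.

Definition deriv_within (A : set R) (v : R -> R) (t l : R) : Prop :=
  (fun s => (v s - v t) / (s - t)) @ within (A `\ t) (nbhs t) --> l.

Definition C1_on (A : set R) (v w : R -> R) : Prop :=
  (forall t, A t -> deriv_within A v t (w t)) /\ {within A, continuous w}.

Definition loc_lipschitz_on (A : set R) (g : R -> R) : Prop :=
  forall x, A x -> exists2 del : R, 0 < del & exists L : R,
    forall y z, A y -> A z -> `|y - x| < del -> `|z - x| < del ->
      `|g y - g z| <= L * `|y - z|.

Definition phi_p (p w : R) : R := (`|w| `^ (p - 2)) * w.

Definition hfun (N : nat) (p : R) (K : R -> R) (t : R) : R :=
  (((N%:R - p) / (p - 1)) `^ (- p)) * (t `^ (p * (N%:R - 1) / (p - N%:R)))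
  * K (t `^ ((p - 1) / (p - N%:R))).

Definition is_solution (N : nat) (p : R) (K f : R -> R) (a d : R)
    (v dv : R -> R) : Prop :=
  C1_on `[0, d] v dv /\ v 0 = 0 /\
  (forall t, 0 < t <= d ->
     (@lebesgue_measure R).-integrable `]0, t[
        (fun s => (hfun N p K s * f (v s))%:E)) /\
  (forall t, 0 <= t <= d ->
     (phi_p p (dv t))%:E = ((a `^ (p - 1))%:E -
        \int[@lebesgue_measure R]_(s in (`]0%R, t[ : set R))
           (hfun N p K s * f (v s))%:E)%E).

End Defs.

(* Main.v *)
Require Import Defs.
From HB Require Import structures.
From mathcomp Require Import all_boot all_order all_algebra.
From mathcomp Require Import all_classical all_reals all_analysis.
From mathcomp Require Import ring lra.
Set Implicit Arguments. Unset Strict Implicit. Unset Printing Implicit Defensive.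
Import Order.TTheory GRing.Theory Num.Theory.
Import numFieldNormedType.Exports.
Local Open Scope classical_set_scope.
Local Open Scope ring_scope.

Section Gen.
Variable R : realType.
Local Notation mu := (@lebesgue_measure R).


Lemma near_within_ex (A : set R) (t : R) (P : R -> Prop) :
  (\forall s \near within A (nbhs t), P s) ->
  exists2 d : R, 0 < d & forall s, A s -> `|s - t| < d -> P s.
Proof.
rewrite near_withinE => /nbhs_ballP[d d0 H]; exists d => // s As st.
by apply: H => //; rewrite /ball /= distrC.
Qed.

Lemma ex_near_within (A : set R) (t : R) (P : R -> Prop) :
  (exists2 d : R, 0 < d & forall s, A s -> `|s - t| < d -> P s) ->
  (\forall s \near within A (nbhs t), P s).
Proof.
move=> [d d0 H]; rewrite near_withinE; apply/nbhs_ballP; exists d => // s.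
by rewrite /ball /= distrC => ? ?; apply: H.
Qed.

Lemma within_cont_ed (A : set R) (f : R -> R) :
  {within A, continuous f} <-> forall x, A x -> forall e : R, 0 < e ->
    exists2 d : R, 0 < d & forall y, A y -> `|y - x| < d -> `|f y - f x| < e.
Proof.
rewrite subspace_continuousP; split.
- move=> H x Ax e e0; move/cvgrPdist_lt: (H x Ax) => /(_ e e0).
  move/near_within_ex => [d d0 Hd]; exists d => // y Ay yx.
  by rewrite distrC; apply: Hd.
- move=> H x Ax; apply/cvgrPdist_lt => e e0; apply: ex_near_within.
  have [d d0 Hd] := H x Ax e e0; exists d => // y Ay yx.
  by rewrite distrC; apply: Hd.
Qed.

Lemma deriv_within_ed (A : set R) f t l : deriv_within A f t l ->
  forall e, 0 < e -> exists2 d : R, 0 < d & forall s, A s -> s != t ->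
   `|s - t| < d -> `|(f s - f t) / (s - t) - l| < e.
Proof.
move=> H e e0; move/cvgrPdist_lt: H => /(_ e e0).
move/near_within_ex => [d d0 Hd]; exists d => // s As st sd.
by rewrite distrC; apply: Hd => //; split => //; apply/eqP.
Qed.

Lemma deriv_within_cont (A : set R) f (w : R -> R) :
  (forall t, A t -> deriv_within A f t (w t)) -> {within A, continuous f}.
Proof.
move=> H; apply/within_cont_ed => x Ax e e0.
have [d d0 Hd] := @deriv_within_ed _ _ _ _ (H x Ax) 1 ltr01.
pose c := `|w x| + 1.
have c0 : 0 < c by rewrite /c ltr_wpDl.
exists (Num.min d (e / c)); first by rewrite lt_min d0 divr_gt0.
move=> y Ay; rewrite lt_min => /andP[yd ye].
have [->|yx] := eqVneq y x; first by rewrite subrr normr0.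
have yx0 : y - x != 0 by rewrite subr_eq0.
have := Hd y Ay yx yd => H1.
have H2 : `|(f y - f x) / (y - x)| < c.
  rewrite /c; apply: (le_lt_trans (y := `|w x| + `|(f y - f x) / (y - x) - w x|)).
    by rewrite -[X in `|X|](subrK (w x)) addrC ler_normD.
  by rewrite ltrD2l.
have -> : f y - f x = (f y - f x) / (y - x) * (y - x) by rewrite divfK.
rewrite normrM; apply: (le_lt_trans (y := c * `|y - x|)).
  by rewrite ler_wpM2r // ltW.
by rewrite mulrC -ltr_pdivlMr.
Qed.

Lemma deriv_within_is_derive (a b x : R) f l :
  deriv_within `[a, b] f x l -> a < x < b -> is_derive x 1 f l.
Proof.
move=> H /andP[ax xb].
have L : (fun h => h^-1 *: ((f \o shift x) (h *: 1) - f x)) @ 0^' --> l.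
  apply/cvgrPdist_lt => e e0.
  have [d d0 Hd] := @deriv_within_ed _ _ _ _ H e e0.
  pose d' := Num.min d (Num.min (x - a) (b - x)).
  have d'0 : 0 < d' by rewrite !lt_min d0 !subr_gt0 ax xb.
  rewrite /dnbhs near_withinE; apply/nbhs_ballP; exists d' => // h.
  rewrite /ball /= sub0r normrN => hd h0.
  have h0' : h != 0 by [].
  move: hd; rewrite !lt_min => /and3P[hd ha hb].
  rewrite distrC /= scaler1 /shift.
  have -> : h^-1 *: (f (h + x) - f x) = (f (h + x) - f x) / (h + x - x).
    by rewrite addrK mulrC.
  apply: Hd.
  - rewrite /= in_itv /=; apply/andP; split.
      have := ler_norm (- h); rewrite normrN => hh.
      by rewrite -lerBlDr; apply: ltW; rewrite -opprB ltrNl (le_lt_trans hh).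
    by rewrite addrC -lerBrDl ltW // (le_lt_trans (ler_norm h)).
  - by rewrite -subr_eq0 addrK.
  - by rewrite addrK.
have D : derivable f x 1 by apply/cvg_ex; exists l.
split => //; rewrite /derive; exact: cvg_lim L.
Qed.



Definition hitset (d : R) (g : R -> R) := [set t : R | 0 <= t <= d /\ g t <= 0].
Definition fz (d : R) (g : R -> R) := inf (hitset d g).

Lemma first_hit (d : R) (g : R -> R) : 0 < d ->
  {within `[0, d], continuous g} -> 0 < g 0 ->
  (exists t, 0 <= t <= d /\ g t <= 0) ->
  [/\ 0 < fz d g, fz d g <= d, g (fz d g) = 0,
      (forall u, 0 <= u < fz d g -> 0 < g u) &
      (forall t, 0 <= t <= d -> g t <= 0 -> fz d g <= t)].
Proof.
move=> d0 /within_cont_ed gc g0 [t0 [t0d gt0]].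
have ne : hitset d g !=set0 by exists t0.
have lb : has_lbound (hitset d g) by exists 0 => y [/andP[]].
have hinf : has_inf (hitset d g) by [].
set M := fz d g.
have Mlb : forall t, 0 <= t <= d -> g t <= 0 -> M <= t.
  by move=> t td gt; apply: ge_inf => //.
have M0 : 0 <= M by apply: lb_le_inf => // y [/andP[]].
have Md : M <= d by apply: (le_trans (Mlb _ t0d gt0)); case/andP: t0d.
have M0d : [set` `[0, d]] M by rewrite /= in_itv /= M0 Md.
have gM : g M <= 0.
  rewrite leNgt; apply/negP => gMp.
  have [del del0 Hd] := gc M M0d (g M) gMp.
  have [y [/andP[y0 yd] gy] yM] := inf_adherent del0 hinf.
  have My : M <= y by apply: Mlb => //; rewrite y0.
  have : `|g y - g M| < g M.
    apply: Hd; first by rewrite /= in_itv /= y0.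
    by rewrite ger0_norm ?subr_ge0 // ltrBlDl.
  rewrite ltr_norml => /andP[+ _]; rewrite ltrBrDr addNr => h.
  by move: gy; rewrite leNgt h.
have Mpos : 0 < M.
  rewrite lt_neqAle M0 andbT; apply/negP => /eqP M0'.
  by move: gM; rewrite -M0' leNgt g0.
have below : forall u, 0 <= u < M -> 0 < g u.
  move=> u /andP[u0 uM]; rewrite ltNge; apply/negP => gu.
  have := Mlb u; rewrite u0 (le_trans (ltW uM) Md) => /(_ isT gu).
  by rewrite leNgt uM.
split => //.
apply/eqP; rewrite eq_le gM /=; rewrite leNgt; apply/negP => gMn.
have [del del0 Hd] := gc M M0d (- g M) ltac:(by rewrite oppr_gt0).
pose u := Num.max 0 (M - del / 2).
have u0 : 0 <= u by rewrite /u le_max lexx.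
have uM : u < M by rewrite /u gt_max Mpos /= ltrBlDr ltrDl divr_gt0.
have : `|g u - g M| < - g M.
  apply: Hd; first by rewrite /= in_itv /= u0 (le_trans (ltW uM) Md).
  rewrite ltr0_norm ?subr_lt0 // opprB /u.
  have [h|h] := leP 0 (M - del/2).
    by lra.
  by move: h; lra.
rewrite ltr_norml => /andP[_]; rewrite ltrBlDr addNr.
by rewrite ltNge (ltW (below u _)) // u0 uM.
Qed.

Lemma mvt_C1 (d : R) v dv x y : C1_on `[0, d] v dv -> 0 <= x -> x < y -> y <= d ->
  exists2 c, x < c < y & v y - v x = dv c * (y - x).
Proof.
move=> [Hd Hc] x0 xy yd.
have itv c : x <= c <= y -> [set` `[0, d]] c.
  by move=> /andP[xc cy]; rewrite /= in_itv /= (le_trans x0 xc) (le_trans cy yd).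
have DER : forall c, c \in `]x, y[ -> is_derive c 1 v (dv c).
  move=> c; rewrite in_itv /= => /andP[xc cy].
  apply: (@deriv_within_is_derive 0 d); first by apply: Hd; apply: itv; rewrite !ltW.
  by rewrite (le_lt_trans x0 xc) (lt_le_trans cy yd).
have CONT : {within `[x, y], continuous v}.
  apply: (@continuous_subspaceW _ _ _ `[0, d]).
    by move=> c /=; rewrite in_itv /= => /itv.
  exact: deriv_within_cont Hd.
have [c] := MVT xy DER CONT.
by rewrite in_itv /= => /andP[xc cy] E; exists c => //; rewrite xc cy.
Qed.

Lemma mvt_lb (d : R) v dv x y k : C1_on `[0, d] v dv -> 0 <= x -> x <= y -> y <= d ->
  (forall c, x < c < y -> k <= dv c) -> k * (y - x) <= v y - v x.
Proof.
move=> C x0; rewrite le_eqVlt => /predU1P[<-|xy] yd H.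
  by rewrite !subrr mulr0.
have [c /H kc ->] := mvt_C1 C x0 xy yd.
by rewrite ler_wpM2r // subr_ge0 ltW.
Qed.

Lemma mvt_ub (d : R) v dv x y k : C1_on `[0, d] v dv -> 0 <= x -> x <= y -> y <= d ->
  (forall c, x < c < y -> dv c <= k) -> v y - v x <= k * (y - x).
Proof.
move=> C x0; rewrite le_eqVlt => /predU1P[<-|xy] yd H.
  by rewrite !subrr mulr0.
have [c /H kc ->] := mvt_C1 C x0 xy yd.
by rewrite ler_wpM2r // subr_ge0 ltW.
Qed.

Lemma phi_pos (p w : R) : 1 < p -> 0 < w -> phi_p p w = w `^ (p - 1).
Proof.
move=> p1 w0; rewrite /phi_p gtr0_norm // mulrC.
have -> : p - 2 = (p - 1) - 1 by ring.
by rewrite mulr_powRB1 ?ltW // subr_gt0.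
Qed.

Lemma phi_ge0 (p w : R) : 0 <= w -> 0 <= phi_p p w.
Proof. by move=> w0; rewrite /phi_p mulr_ge0 // powR_ge0. Qed.

Lemma phi_le0 (p w : R) : w <= 0 -> phi_p p w <= 0.
Proof. by move=> w0; rewrite /phi_p mulr_ge0_le0 // powR_ge0. Qed.

Lemma phi_gt (p w c : R) : 1 < p -> 0 < c -> c `^ (p - 1) < phi_p p w -> c < w.
Proof.
move=> p1 c0 H; have [w0|w0] := leP w 0.
  by move: H; rewrite ltNge (le_trans (phi_le0 p w0)) // powR_ge0.
move: H; rewrite phi_pos // ltNge; apply: contraNlt => wc.
by rewrite ge0_ler_powR // ?subr_ge0 ?ltW // nnegrE ltW.
Qed.

Lemma phi_lt0 (p w : R) : phi_p p w < 0 -> w < 0.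
Proof. by apply: contraTlt => w0; rewrite -leNgt phi_ge0. Qed.

Lemma phi_gt0 (p w : R) : 0 < phi_p p w -> 0 < w.
Proof. by apply: contraTlt => w0; rewrite -leNgt phi_le0. Qed.

Lemma loc_lip_cont (A : set R) (g : R -> R) : loc_lipschitz_on A g ->
  {within A, continuous g}.
Proof.
move=> H; apply/within_cont_ed => x Ax e e0.
have [del del0 [L HL]] := H x Ax.
pose L' := `|L| + 1.
have L'0 : 0 < L' by rewrite /L' ltr_wpDl.
exists (Num.min del (e / L')); first by rewrite lt_min del0 divr_gt0.
move=> y Ay; rewrite lt_min => /andP[yd ye].
have := HL y x Ay Ax yd; rewrite subrr normr0 => /(_ del0) H1.
apply: (le_lt_trans H1); apply: (le_lt_trans (y := L' * `|y - x|)).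
  by rewrite ler_wpM2r // (le_trans (ler_norm L)) // /L' lerDl.
by rewrite mulrC -ltr_pdivlMr.
Qed.

Lemma cont_bounded (a b : R) (g : R -> R) : {within `[a, b], continuous g} ->
  exists C : R, forall t, a <= t <= b -> `|g t| <= C.
Proof.
move=> gc; have [ab|ba] := leP a b; last first.
  by exists 0 => t /andP[a_t tb]; have := lt_le_trans ba (le_trans a_t tb); rewrite ltxx.
have [c1 _ H1] := EVT_max ab gc.
have [c2 _ H2] := EVT_min ab gc.
exists (`|g c1| + `|g c2|) => t tab.
have tin : t \in `[a, b] by rewrite in_itv.
rewrite ler_norml; apply/andP; split.
  rewrite (le_trans _ (H2 t tin)) //; have := ler_norm (- g c2).
  have := normr_ge0 (g c1); rewrite normrN; lra.
rewrite (le_trans (H1 t tin)) //; have := ler_norm (g c1).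
have := normr_ge0 (g c2); lra.
Qed.


Lemma powR_pos_mul (x q : R) : 0 < x -> 0 < q -> x `^ (q - 1) * x = x `^ q.
Proof. by move=> x0 q0; rewrite mulrC mulr_powRB1 // ltW. Qed.

Lemma powR_le (x y q : R) : 0 <= q -> 0 <= x -> x <= y -> x `^ q <= y `^ q.
Proof. by move=> q0 x0 xy; rewrite ge0_ler_powR // nnegrE // (le_trans x0). Qed.

Lemma powR_lt (x y q : R) : 0 < q -> 0 <= x -> x < y -> x `^ q < y `^ q.
Proof. by move=> q0 x0 xy; rewrite gt0_ltr_powR // nnegrE // ltW // (le_lt_trans x0). Qed.

Lemma powR_inv_anti (x y q : R) : 0 <= q -> 0 < y -> y <= x ->
  (x `^ q)^-1 <= (y `^ q)^-1.
Proof.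
move=> q0 y0 yx; rewrite lef_pV2 ?posrE ?powR_gt0 // ?(lt_le_trans y0) //.
by apply: powR_le => //; rewrite ltW.
Qed.

Lemma cont_sub (A B : set R) (g : R -> R) : B `<=` A ->
  {within A, continuous g} -> {within B, continuous g}.
Proof. by move=> BA; apply: continuous_subspaceW. Qed.

Section Fsec.
Variables (f g1 g2 : R -> R) (l m beta p : R).
Hypothesis p1 : 1 < p.
Hypothesis Hflip : loc_lipschitz_on [set u | u != 0] f.
Hypothesis Hl : p - 1 < l.
Hypothesis H1 : exists U : R, forall u, U < `|u| -> f u = `|u| `^ (l - 1) * u + g1 u.
Hypothesis H1lim : (fun u => `|g1 u| / `|u| `^ l) @ +oo --> (0 : R).
Hypothesis Hg2 : loc_lipschitz_on setT g2.
Hypothesis g20 : g2 0 = 0.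
Hypothesis Hm : 0 < m < 1.
Hypothesis H2 : exists2 del : R, 0 < del & forall u, 0 < `|u| < del ->
      f u = - (1 / (`|u| `^ (m - 1) * u)) + g2 u.
Hypothesis Hb : 0 < beta.
Hypothesis Hfb : f beta = 0.
Hypothesis Hneg : forall u, 0 < u < beta -> f u < 0.
Hypothesis Hpos : forall u, beta < u -> 0 < f u.

Lemma l0 : 0 < l.
Proof. by move: p1 Hl; lra. Qed.

Lemma f_big : exists2 X1 : R, 0 < X1 & forall x, X1 <= x ->
  x `^ l / 2 <= f x /\ f x <= 2 * x `^ l.
Proof.
have [U HU] := H1.
move/cvgrPdist_lt: H1lim => /(_ (1/2) ltac:(lra)) [M [Mr HM]].
exists (Num.max (Num.max M U) 1 + 1).
  by rewrite ltr_wpDl // le_max ler01 orbT.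
move=> x; rewrite -lerBrDr => xM.
have Mx : M < x by move: xM; rewrite !ge_max => /andP[/andP[]]; lra.
have Ux : U < x by move: xM; rewrite !ge_max => /andP[/andP[]]; lra.
have x1 : 1 < x by move: xM; rewrite !ge_max => /andP[/andP[]]; lra.
have x0 : 0 < x by lra.
have := HM x Mx; rewrite sub0r normrN ger0_norm ?divr_ge0 ?powR_ge0 //.
rewrite (gtr0_norm x0) ltr_pdivrMr ?powR_gt0 // => Hg.
rewrite HU ?gtr0_norm // powR_pos_mul //; last exact: l0.
have := ler_norm (g1 x); have := ler_norm (- g1 x); rewrite normrN.
have := powR_gt0 l x0; lra.
Qed.

Lemma f_small : exists2 x0 : R, 0 < x0 & forall x, 0 < x < x0 ->
  [/\ f x <= - (x `^ m)^-1 + 1, - (x `^ m)^-1 - 1 <= f x & 2 <= (x `^ m)^-1].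
Proof.
have [del del0 Hd] := H2.
have /within_cont_ed := loc_lip_cont Hg2.
move=> /(_ 0 I 1 ltr01) [d d0 Hg].
have m0 : 0 < m by case/andP: Hm.
pose x1 := (1/2 : R) `^ (1 / m).
have x10 : 0 < x1 by rewrite powR_gt0.
exists (Num.min del (Num.min d x1)); first by rewrite !lt_min del0 d0 x10.
move=> x /andP[x0]; rewrite !lt_min => /and3P[xdel xd xx1].
have xm : x `^ m < 1/2.
  have -> : (1/2 : R) = x1 `^ m.
    by rewrite /x1 -powRrM divfK ?gt_eqF // powRr1 //; lra.
  by apply: powR_lt => //; rewrite ltW.
have xm0 : 0 < x `^ m by rewrite powR_gt0.
have E : f x = - (x `^ m)^-1 + g2 x.
  rewrite Hd; last by rewrite gtr0_norm // x0.
  by rewrite gtr0_norm // powR_pos_mul // div1r.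
have G : `|g2 x| < 1.
  by have := Hg x I; rewrite subr0 g20 subr0 gtr0_norm // => /(_ xd).
have I2 : 2 <= (x `^ m)^-1.
  by rewrite -[2]invrK lef_pV2 ?posrE // ?ltW //; lra.
rewrite E; split => //.
- by have := ler_norm (g2 x); lra.
- by have := ler_norm (- g2 x); rewrite normrN; lra.
Qed.

Lemma f_lower : exists2 C0 : R, 0 <= C0 & forall x, 0 < x ->
  - (x `^ m)^-1 - C0 <= f x.
Proof.
have [x0 x00 Hs] := f_small.
have cf : {within `[x0, beta], continuous f}.
  apply: (cont_sub _ (loc_lip_cont Hflip)) => u /=; rewrite in_itv /= => /andP[u0 _].
  by rewrite gt_eqF // (lt_le_trans x00 u0).
have [Cb HCb] := cont_bounded cf.
exists (1 + `|Cb|); first by rewrite addr_ge0 // normr_ge0.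
move=> x x_0.
have xm0 : 0 <= (x `^ m)^-1 by rewrite invr_ge0 powR_ge0.
have [xx0|x0x] := ltP x x0.
  have [_ H _] := Hs x ltac:(by rewrite x_0 xx0).
  by have := normr_ge0 Cb; lra.
have [xb|bx] := leP x beta.
  have := HCb x ltac:(by rewrite x0x xb).
  have := ler_norm Cb; have := ler_norm (- f x); rewrite normrN; lra.
have := Hpos bx; have := normr_ge0 Cb; lra.
Qed.

Lemma f_upper : exists2 Cf : R, 0 <= Cf & forall x, 0 < x ->
  f x <= 2 * x `^ l + Cf.
Proof.
have [X1 X10 HX] := f_big.
have cf : {within `[beta, X1], continuous f}.
  apply: (cont_sub _ (loc_lip_cont Hflip)) => u /=; rewrite in_itv /= => /andP[u0 _].
  by rewrite gt_eqF // (lt_le_trans Hb u0).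
have [Cb HCb] := cont_bounded cf.
exists `|Cb|; first by rewrite normr_ge0.
move=> x x_0.
have xl : 0 <= x `^ l by rewrite powR_ge0.
have [xb|bx] := ltP x beta.
  have := Hneg (ltac:(by rewrite x_0 xb) : 0 < x < beta).
  have := normr_ge0 Cb; lra.
have [xX|Xx] := leP x X1.
  have := HCb x ltac:(by rewrite bx xX).
  have := ler_norm Cb; have := ler_norm (f x); lra.
have [_ H] := HX x (ltW Xx); have := normr_ge0 Cb; lra.
Qed.

End Fsec.



Lemma eq_to_real (phi A : R) (F : R -> R) (i : interval R) (D := [set` i]) :
  mu.-integrable D (EFin \o F) ->
  phi%:E = (A%:E - \int[mu]_(x in D) (F x)%:E)%E ->
  phi = A - \int[mu]_(x in D) F x.
Proof.
move=> iF; rewrite /Rintegral.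
have := @integrable_fin_num _ _ _ mu _ (measurable_itv i) _ iF.
move: (\int[mu]_(x in D) (F x)%:E)%E => J; case: J => //= r _.
by rewrite -EFinB => -[].
Qed.

Lemma small_int (s1 : R) (F : R -> R) : 0 < s1 ->
  mu.-integrable `]0, s1[ (EFin \o F) ->
  forall eta, 0 < eta -> exists2 rho : R, 0 < rho & forall s, 0 <= s <= s1 -> s < rho ->
    \int[mu]_(x in `]0, s[) `|F x| < eta.
Proof.
move=> s10 iF eta eta0.
have iG : mu.-integrable setT (EFin \o (F \_ `]0, s1[)).
  rewrite -restrict_EFin; apply/(integrable_mkcond _ _).1 => //.
have [rho [rho0 H]] := integral_normr_continuous iG eta0.
exists rho => // s /andP[s0 ss1] srho.
have -> : \int[mu]_(x in `]0, s[) `|F x| =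
    \int[mu]_(x in `]0, s[) `|(F \_ `]0, s1[) x|.
  apply: eq_Rintegral => x; rewrite inE /= in_itv /= => /andP[x0 xs].
  by rewrite patchE ifT // inE /= in_itv /= x0 (lt_le_trans xs ss1).
apply: H => //.
change (lebesgue_measure ([set` `]0, s[%R] : set R) < rho%:E)%E.
rewrite lebesgue_measure_itv /= lte_fin.
case: ifP => _; last by rewrite lte_fin.
by rewrite -EFinD lte_fin subr0.
Qed.


Lemma pow_lb (d t g : R) : 0 < d -> d <= t -> t <= 1 -> Num.min 1 (d `^ g) <= t `^ g.
Proof.
move=> d0 dt t1; have t0 : 0 < t by apply: lt_le_trans dt.
have [g0|g0] := leP 0 g.
  by rewrite ge_min (powR_le g0 (ltW d0) dt) orbT.
rewrite ge_min; apply/orP; left.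
have -> : g = - (- g) by rewrite opprK.
rewrite powRN -[X in X <= _]invr1 lef_pV2 ?posrE ?powR_gt0 //.
have := @powR_le t 1 (- g) ltac:(by rewrite oppr_ge0 ltW) (ltW t0) t1.
by rewrite powR1.
Qed.

Section Hsec.
Variables (N : nat) (p : R) (K : R -> R) (R0 K0 alpha : R).
Hypothesis p1 : 1 < p.
Hypothesis pN : p < N%:R.
Hypothesis R00 : 0 < R0.
Hypothesis Kpos : forall r, R0 <= r -> 0 < K r.
Hypothesis K00 : 0 < K0.
Hypothesis Klb : forall r, R0 <= r -> K0 / r `^ alpha <= K r.

Let T := R0 `^ ((p - N%:R) / (p - 1)).
Let e1 := p * (N%:R - 1) / (p - N%:R).
Let e2 := (p - 1) / (p - N%:R).
Let c := ((N%:R - p) / (p - 1)) `^ (- p).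

Lemma hfunE t : hfun N p K t = c * t `^ e1 * K (t `^ e2).
Proof. by []. Qed.

Lemma T_pos : 0 < T.
Proof. by rewrite powR_gt0. Qed.

Lemma arg_ge t : 0 < t <= T -> R0 <= t `^ e2.
Proof.
move=> /andP[t0 tT].
have q0 : 0 <= (p - 1) / (N%:R - p) by rewrite divr_ge0 // subr_ge0 ltW.
have -> : e2 = - ((p - 1) / (N%:R - p)).
  by rewrite /e2 -mulrN -invrN opprB.
rewrite powRN.
have -> : R0 = (T `^ ((p - 1) / (N%:R - p)))^-1.
  rewrite /T -powRrM -powRN.
  have -> : - ((p - N%:R) / (p - 1) * ((p - 1) / (N%:R - p))) = 1.
    field; rewrite ?subr_eq0 ?gt_eqF ?lt_eqF //; move: p1 pN; lra.
  by rewrite powRr1 // ltW.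
exact: powR_inv_anti.
Qed.

Lemma c_pos : 0 < c.
Proof. by rewrite powR_gt0 // divr_gt0 // subr_gt0. Qed.

Lemma h_pos t : 0 < t <= T -> 0 < hfun N p K t.
Proof.
move=> tT; rewrite hfunE mulr_gt0 // ?mulr_gt0 ?c_pos ?powR_gt0 //.
  by case/andP: tT.
by apply: Kpos; apply: arg_ge.
Qed.

Lemma h_lb d : 0 < d -> 2 * d <= T -> 2 * d <= 1 ->
  exists2 hm : R, 0 < hm & forall t, d <= t <= 2 * d -> hm <= hfun N p K t.
Proof.
move=> d0 dT d1.
pose g2 := - (e2 * alpha).
exists (c * K0 * Num.min 1 (d `^ e1) * Num.min 1 (d `^ g2)).
  by rewrite !mulr_gt0 ?c_pos // lt_min ltr01 powR_gt0.
move=> t /andP[dt t2d].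
have t0 : 0 < t by apply: lt_le_trans dt.
have tT : 0 < t <= T by rewrite t0 (le_trans t2d dT).
have t1 : t <= 1 by apply: (le_trans t2d).
have A := arg_ge tT.
have Kl := Klb A.
have E : K0 / (t `^ e2) `^ alpha = K0 * t `^ g2.
  by rewrite -powRrM /g2 powRN.
have H1 : Num.min 1 (d `^ e1) * Num.min 1 (d `^ g2) <= t `^ e1 * t `^ g2.
  apply: ler_pM; rewrite ?le_min ?ler01 ?powR_ge0 //; exact: pow_lb.
rewrite hfunE -!mulrA ler_pM2l ?c_pos //.
apply: (le_trans (y := K0 * (t `^ e1 * t `^ g2))); first by rewrite ler_pM2l.
by rewrite mulrCA ler_pM2l ?powR_gt0 // -E.
Qed.

End Hsec.

End Gen.

Section Int.
Variable R : realType.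
Local Notation mu := (@lebesgue_measure R).

Lemma cont_constB (A : set R) (g : R -> R) (c : R) :
  {within A, continuous g} -> {within A, continuous (fun t => c - g t)}.
Proof.
move/within_cont_ed => H; apply/within_cont_ed => x Ax e e0.
have [d d0 Hd] := H x Ax e e0; exists d => // y Ay yx.
by rewrite opprB addrC addrA subrK -normrN opprB; apply: Hd.
Qed.

Lemma cont_Bconst (A : set R) (g : R -> R) (c : R) :
  {within A, continuous g} -> {within A, continuous (fun t => g t - c)}.
Proof.
move/within_cont_ed => H; apply/within_cont_ed => x Ax e e0.
have [d d0 Hd] := H x Ax e e0; exists d => // y Ay yx.
have -> : g y - c - (g x - c) = g y - g x by ring.
exact: Hd.
Qed.

Lemma integrable_scale (i : interval R) (F : R -> R) (k : R) :
  mu.-integrable [set` i] (EFin \o F) ->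
  mu.-integrable [set` i] (EFin \o (fun x => k * F x)).
Proof.
move=> iF; have := @integrableZl _ _ _ mu _ (measurable_itv i) k _ iF.
apply: (@eq_integrable _ _ _ mu _ (measurable_itv i)) => x _ /=.
by rewrite EFinM.
Qed.

Lemma integrableS_itv (i j : interval R) (F : R -> R) :
  [set` i] `<=` [set` j] ->
  mu.-integrable [set` j] (EFin \o F) -> mu.-integrable [set` i] (EFin \o F).
Proof.
move=> ij iF.
exact: (@integrableS _ _ _ mu _ _ _ (measurable_itv _) (measurable_itv _) ij iF).
Qed.

Lemma Rle_itv (i : interval R) (F1 F2 : R -> R) :
  mu.-integrable [set` i] (EFin \o F1) -> mu.-integrable [set` i] (EFin \o F2) ->
  (forall x, x \in i -> F1 x <= F2 x) ->
  \int[mu]_(x in [set` i]) F1 x <= \int[mu]_(x in [set` i]) F2 x.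
Proof.
move=> i1 i2 H.
apply: (@le_Rintegral _ _ _ mu _ _ _ (measurable_itv i) i1 i2) => x xi.
by apply: H.
Qed.

Lemma RZl_itv (i : interval R) (F : R -> R) (k : R) :
  mu.-integrable [set` i] (EFin \o F) ->
  \int[mu]_(x in [set` i]) (k * F x) = k * \int[mu]_(x in [set` i]) F x.
Proof.
move=> iF; exact: (@RintegralZl _ _ _ mu _ _ _ (measurable_itv i) iF).
Qed.

Lemma int_cst_itv (a b c : R) :
  mu.-integrable [set` `[a, b[] (EFin \o (fun _ => c)).
Proof.
apply: (@measurable_bounded_integrable _ _ _ mu _ _ (measurable_itv `[a, b[)).
- change (lebesgue_measure ([set` `[a, b[%R] : set R) < +oo)%E.
  by rewrite lebesgue_measure_itv; case: ifP => _ //=; rewrite -EFinD ltry.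
- exact: measurable_cst.
- exists `|c|; split => // r cr x _ /=; rewrite (le_trans _ (ltW cr)) //.
Qed.

Lemma Rint_cst_itv (a b c : R) : a <= b ->
  \int[mu]_(x in [set` `[a, b[]) c = c * (b - a).
Proof.
move=> ab; rewrite (@Rintegral_cst _ _ _ mu _ (measurable_itv _) c).
change (c * fine (lebesgue_measure ([set` `[a, b[%R] : set R)) = c * (b - a)).
rewrite lebesgue_measure_itv /=.
case: ifPn => [_|]; first by rewrite -EFinD.
rewrite lte_fin -leNgt => ba.
have -> : b = a by apply/eqP; rewrite eq_le ab ba.
by rewrite subrr !mulr0.
Qed.

Lemma Rint_split (a b c : R) (F : R -> R) : a < b -> b <= c ->
  mu.-integrable [set` `]a, c[] (EFin \o F) ->
  \int[mu]_(x in [set` `]a, c[]) F x =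
  \int[mu]_(x in [set` `]a, b[]) F x + \int[mu]_(x in [set` `[b, c[]) F x.
Proof.
move=> ab bc iF.
rewrite (@itv_bndbnd_setU _ _ _ (BLeft b)) ?bnd_simp //.
rewrite (@Rintegral_setU _ _ _ mu _ _ _ (measurable_itv _) (measurable_itv _)) //.
- by rewrite -itv_bndbnd_setU // bnd_simp.
- apply/disj_set2P; rewrite -subset0 => z /=; rewrite !in_itv /= => -[/andP[_ zb] /andP[bz _]].
  by move: zb; rewrite ltNge bz.
Qed.

End Int.

Section Pw.
Variable R : realType.
Lemma pow_large (q Y : R) : 0 < q -> exists A : R, 0 <= A /\ forall a, A < a -> Y < a `^ q.
Proof.
move=> q0; exists ((`|Y| + 1) `^ (1 / q)); split; first exact: powR_ge0.
move=> a aA.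
have E : ((`|Y| + 1) `^ (1 / q)) `^ q = `|Y| + 1.
  by rewrite -powRrM divfK ?gt_eqF // powRr1 // addr_ge0 // normr_ge0.
have := powR_lt q0 (powR_ge0 _ _) aA; rewrite E.
by have := ler_norm Y; lra.
Qed.

Lemma pow_small (q Y : R) : q < 0 -> 0 < Y -> exists A : R, 0 <= A /\ forall a, A < a -> a `^ q < Y.
Proof.
move=> q0 Y0; have [A [A0 HA]] := @pow_large (- q) (Y^-1) ltac:(by rewrite oppr_gt0).
exists A; split => // a aA; have a0 : 0 < a by apply: le_lt_trans aA.
have H := HA a aA; rewrite -[q]opprK powRN -[Y]invrK.
by rewrite ltf_pV2 ?posrE ?invr_gt0 ?powR_gt0.
Qed.
End Pw.

Section Theta.
Variable R : realType.
Definition theta (p : R) := (1/2 : R) `^ (1 / (p - 1)).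

Lemma theta_gt0 (p : R) : 0 < theta p.
Proof. by rewrite powR_gt0 //; lra. Qed.

Lemma theta_pow (p a : R) : 1 < p -> 0 <= a -> (theta p * a) `^ (p - 1) = a `^ (p - 1) / 2.
Proof.
move=> p1 a0; rewrite powRM; last 2 first.
- exact: ltW (theta_gt0 p).
- exact: a0.
rewrite /theta -powRrM divfK ?powRr1.
- by rewrite mulrC div1r.
all: try lra.
all: by rewrite gt_eqF // subr_gt0.
Qed.
End Theta.


Lemma main_step (R : realType) (p l m : R) (f h : R -> R) (v dv : R -> R -> R)
  (T C1 s1 C0 Cf X1 : R)
  (p1 : 1 < p) (Hl : p - 1 < l) (m0 : 0 <= m) (T0 : 0 < T)
  (HC1 : forall a, 0 < a -> C1_on `[0, T] (v a) (dv a))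
  (Hv0 : forall a, 0 < a -> v a 0 = 0)
  (Hint : forall a t, 0 < a -> 0 <= t <= T ->
     (@lebesgue_measure R).-integrable `]0, t[ (EFin \o (fun s => h s * f (v a s))))
  (Heq : forall a t, 0 < a -> 0 <= t <= T -> phi_p p (dv a t) =
     a `^ (p - 1) - \int[@lebesgue_measure R]_(s in `]0, t[) (h s * f (v a s)))
  (Hdv0 : forall a, 0 < a -> theta p * a < dv a 0)
  (hpos : forall t, 0 < t <= T -> 0 < h t)
  (hlb : forall d, 0 < d -> 2 * d <= T -> 2 * d <= 1 ->
     exists2 hm : R, 0 < hm & forall t, d <= t <= 2 * d -> hm <= h t)
  (C00 : 0 <= C0) (HC0 : forall x, 0 < x -> - (x `^ m)^-1 - C0 <= f x)
  (Cf0 : 0 <= Cf) (HCf : forall x, 0 < x -> f x <= 2 * x `^ l + Cf)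
  (X10 : 0 < X1) (HX1 : forall x, X1 <= x -> x `^ l / 2 <= f x /\ f x <= 2 * x `^ l)
  (C11 : 1 <= C1) (s10 : 0 < s1) (s1T : 2 * s1 <= T) (s11 : 2 * s1 <= 1)
  (Hv1 : forall u, 0 <= u <= T -> v 1 u <= C1 * u)
  (Hdom : forall u, 0 < u < s1 -> [/\ 0 < v 1 u, h u <= `|h u * f (v 1 u)| &
       h u * ((v 1 u) `^ m)^-1 <= 2 * `|h u * f (v 1 u)|])
  (d B' : R) (d0 : 0 < d) (ds1 : 2 * d <= s1) :
  exists A : R, forall a, A < a ->
    0 < a /\ (exists t, 0 <= t <= 2 * d /\ dv a t <= 0) /\ B' <= v a (fz T (dv a)).
Proof.
pose mu := @lebesgue_measure R.
pose G a u := h u * f (v a u).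
pose D u := `|G 1 u|.
have iD : mu.-integrable [set` `]0, s1[] (EFin \o D).
  apply: integrable_norm; apply: Hint => //; rewrite ltW //; clear -s1T s10; lra.
have dT : 2 * d <= T by clear -ds1 s1T s10 d0; lra.
have d1 : 2 * d <= 1 by clear -ds1 s11 s10 d0; lra.
have [hm hm0 Hhm] := hlb d d0 dT d1.
pose Pd := \int[mu]_(x in [set` `]0, d[]) D x.
have Pd0 : 0 <= Pd by apply: Rintegral_ge0 => x _; rewrite /D normr_ge0.
have l0 : 0 < l by clear -p1 Hl; lra.
pose r := (p - 1) / l.
have r0 : 0 < r by rewrite divr_gt0 // subr_gt0.
have r1 : r < 1 by rewrite /r ltr_pdivrMr // mul1r.
pose kap := Num.max 1 ((4 / (hm * d)) `^ (1 / l)).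
have kap1 : 1 <= kap by rewrite /kap le_max lexx.
have kap0 : 0 < kap by clear -kap1; lra.
have kapl : 4 / (hm * d) <= kap `^ l.
  have -> : 4 / (hm * d) = ((4 / (hm * d)) `^ (1 / l)) `^ l.
    by rewrite -powRrM divfK ?gt_eqF // powRr1 // divr_ge0 // ltW // mulr_gt0.
  apply: powR_le; [exact: ltW | exact: powR_ge0 | by rewrite /kap le_max lexx orbT].
have kapl0 : 0 < kap `^ l by rewrite powR_gt0.
pose eta := 1 / (4 * (2 * kap `^ l + 1)).
have eta0 : 0 < eta by rewrite /eta divr_gt0 // mulr_gt0 //; clear -kapl0; lra.
have [rho rho0 Hrho] := small_int s10 iD eta0.
pose M2 := Num.max (C1 * T) (Num.max X1 (Num.max B' 1)).
have [A1 [A10 HA1]] := @pow_large R r M2 r0.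
have th0 := theta_gt0 p.
have [A2 [A20 HA2]] := @pow_small R (r - 1) (Num.min d rho * theta p / (2 * kap))
   ltac:(by clear -r1; lra) ltac:(by rewrite divr_gt0 ?mulr_gt0 // lt_min d0 rho0).
have [A3 [A30 HA3]] := @pow_large R (p - 1) (Cf + (2 + C0) * Pd + 1) ltac:(by rewrite subr_gt0).
exists (Num.max 1 (Num.max (C1 / theta p) (Num.max A1 (Num.max A2 A3)))).
move=> a; rewrite !gt_max => /and5P[a1 aC aA1 aA2 aA3].
have a0 : 0 < a by clear -a1; lra.
have thC : C1 < theta p * a by move: aC; rewrite ltr_pdivrMr // mulrC.
pose B := kap * a `^ r.
have ar0 : 0 < a `^ r by rewrite powR_gt0.
have M2a : M2 < a `^ r := HA1 a aA1.
have arB : a `^ r <= B by rewrite /B ler_peMl // ltW.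
have M2B : M2 <= B by apply: ltW; apply: lt_le_trans arB.
have [BC1T BX1 BB' B1] : [/\ C1 * T <= B, X1 <= B, B' <= B & 1 <= B].
  by move: M2B; rewrite /M2 !ge_max => /and4P[].
have B0 : 0 < B by clear -B1; lra.
have Bl : B `^ l = kap `^ l * a `^ (p - 1).
  by rewrite /B powRM ?ltW // -powRrM /r divfK ?gt_eqF.
pose tau := 2 * kap * a `^ (r - 1) / theta p.
have tau0 : 0 < tau by rewrite /tau divr_gt0 // !mulr_gt0 // powR_gt0.
have htau : tau < Num.min d rho.
  have H := HA2 a aA2.
  have E : Num.min d rho = 2 * kap * (Num.min d rho * theta p / (2 * kap)) / theta p.
    by field; rewrite !gt_eqF.
  by rewrite E /tau ltr_pM2r ?invr_gt0 // ltr_pM2l // mulr_gt0.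
have htd : tau < d by apply: (lt_le_trans htau); rewrite ge_min lexx.
have htr : tau < rho by apply: (lt_le_trans htau); rewrite ge_min lexx orbT.
have hBtau : theta p * a * tau = 2 * B.
  rewrite /tau /B -(powR_pos_mul a0 r0).
  by field; rewrite gt_eqF.
have big : Cf + (2 + C0) * Pd + 1 < a `^ (p - 1) := HA3 a aA3.
have ap0 : 0 < a `^ (p - 1) by rewrite powR_gt0.
have Ca := HC1 a a0.
have wc : {within `[0, T], continuous (dv a)} by case: Ca.
have V0 : v a 0 = 0 := Hv0 a a0.
have w0 := Hdv0 a a0.
have dT1 : d <= T by clear -dT d0; lra.
have tha0 : 0 < theta p * a by rewrite mulr_gt0.
have Cfa : Cf <= a `^ (p - 1).
  have : 0 <= (2 + C0) * Pd by rewrite mulr_ge0 // addr_ge0.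
  by clear -big; lra.
have phA : exists2 ts, 0 < ts <= d & B < v a ts /\
    forall u, 0 <= u < ts -> theta p * a < dv a u.
  pose g t := dv a t - theta p * a.
  have gc : {within `[0, d], continuous g}.
    apply: cont_Bconst; apply: (cont_sub _ wc) => x /=; rewrite !in_itv /=.
    by move=> /andP[x0 xd]; rewrite x0 (le_trans xd).
  have g0 : 0 < g 0 by rewrite /g subr_gt0.
  have [[t [td gt]]|nh] := pselect (exists t, 0 <= t <= d /\ g t <= 0).
  - have [M0 Md gM gpos _] := first_hit d0 gc g0 (ex_intro _ t (conj td gt)).
    move: M0 Md gM gpos; set M1 := fz d g => M0 Md gM gpos.
    have wpos u : 0 <= u < M1 -> theta p * a < dv a u.
      by move/gpos; rewrite /g subr_gt0.
    have [VB|VB] := ltP B (v a M1).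
      by exists M1; [rewrite M0 | split].
    exfalso.
    have wM : dv a M1 = theta p * a by move: gM; rewrite /g => /eqP; rewrite subr_eq0 => /eqP.
    have M1T : M1 <= T by clear -Md dT1; lra.
    have Vlow : theta p * a * M1 <= v a M1.
      have := mvt_lb Ca (lexx 0) (ltW M0) M1T (k := theta p * a).
      rewrite V0 !subr0; apply => c /andP[c0 cM]; apply/ltW/wpos.
      by rewrite (ltW c0) cM.
    have M1tau : M1 < tau.
      rewrite -(ltr_pM2l tha0) hBtau; clear -Vlow VB B0; lra.
    have Vbnd : forall u, 0 < u < M1 -> 0 < v a u /\ v a u <= B.
      move=> u /andP[u0 uM]; split.
        have := mvt_lb Ca (lexx 0) (ltW u0) (le_trans (ltW uM) M1T) (k := theta p * a).
        rewrite V0 !subr0 => Hq; apply: (lt_le_trans _ (Hq _)); first by rewrite mulr_gt0.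
        by move=> c /andP[c0 cu]; apply/ltW/wpos; rewrite ltW //= (lt_trans cu).
      have := mvt_lb Ca (ltW u0) (ltW uM) M1T (k := 0); rewrite mul0r => Hq.
      have : 0 <= v a M1 - v a u.
        apply: Hq => c /andP[uc cM]; apply/ltW/(lt_trans tha0)/wpos.
        by rewrite cM andbT ltW // (lt_trans u0).
      by clear -VB; lra.
    pose F := 2 * B `^ l + Cf.
    have F0 : 0 <= F by rewrite /F addr_ge0 // mulr_ge0 // powR_ge0.
    have Gle : forall u, u \in `]0, M1[ -> G a u <= F * D u.
      move=> u; rewrite in_itv /= => uM.
      have [Vp VBu] := Vbnd u uM.
      have /andP[u0 uM1] := uM.
      have us1 : 0 < u < s1 by rewrite u0 /=; clear -uM1 Md ds1 d0; lra.
      have [_ hD _] := Hdom u us1.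
      have hp : 0 < h u by apply: hpos; rewrite u0 /=; clear -uM1 M1T; lra.
      have fF : f (v a u) <= F.
        apply: (le_trans (HCf _ Vp)); rewrite /F lerD2r ler_pM2l //.
        by apply: powR_le; [exact: ltW | exact: ltW | exact: VBu].
      rewrite /G; apply: (le_trans (y := h u * F)); first by rewrite ler_pM2l.
      by rewrite mulrC ler_wpM2l.
    have M1s1 : [set` `]0, M1[] `<=` [set` `]0, s1[].
      by apply: subset_itvl; rewrite bnd_simp; clear -Md ds1 d0; lra.
    have Iub : \int[mu]_(x in [set` `]0, M1[]) G a x <= F * eta.
      apply: (le_trans (Rle_itv (Hint a M1 a0 _) (integrable_scale F (integrableS_itv M1s1 iD)) Gle)).
        by rewrite ltW.
      rewrite RZl_itv; last exact: integrableS_itv M1s1 iD.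
      have ED : \int[mu]_(x in [set` `]0, M1[]) D x = \int[mu]_(x in [set` `]0, M1[]) `|D x|.
        by apply: eq_Rintegral => x _; rewrite /D normr_id.
      rewrite ler_wpM2l // ED ltW //; apply: Hrho; first by rewrite ltW //=; clear -Md ds1 d0; lra.
      exact: (lt_trans M1tau htr).
    have := Heq a M1 a0 (ltac:(by rewrite ltW //) : 0 <= M1 <= T).
    rewrite wM phi_pos // ?theta_pow ?ltW //.
    have Fle : F <= (2 * kap `^ l + 1) * a `^ (p - 1).
      have -> : (2 * kap `^ l + 1) * a `^ (p - 1) = 2 * (kap `^ l * a `^ (p - 1)) + a `^ (p - 1) by ring.
      by rewrite /F Bl; clear -Cfa; lra.
    have Fe : F * eta <= a `^ (p - 1) / 4.
      apply: (le_trans (ler_wpM2r (ltW eta0) Fle)); rewrite /eta le_eqVlt; apply/orP; left.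
      by apply/eqP; field; rewrite gt_eqF //; clear -kapl0; lra.
    move: Iub; rewrite -/mu; clear -Fe ap0; lra.
  - exists d; first by rewrite d0 lexx.
    have wpos u : 0 <= u <= d -> theta p * a < dv a u.
      move=> ud; rewrite -subr_gt0 -/(g u) ltNge; apply/negP => gu.
      by apply: nh; exists u.
    split; last by move=> u /andP[u0 ud]; apply: wpos; rewrite u0 ltW.
    have := mvt_lb Ca (lexx 0) (ltW d0) dT1 (k := theta p * a).
    rewrite V0 !subr0 => Hq.
    have : theta p * a * d <= v a d.
      by apply: Hq => c /andP[c0 cd]; apply/ltW/wpos; rewrite !ltW.
    have : theta p * a * tau < theta p * a * d by rewrite ltr_pM2l.
    rewrite hBtau; clear -B0; lra.
have [ts /andP[ts0 tsd] [Vts wts]] := phA.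
have Vc : {within `[0, T], continuous (v a)} by case: Ca => Hd _; exact: deriv_within_cont Hd.
have tsT : ts <= T by clear -tsd dT1; lra.
pose g2 t := B - v a t.
have g2c : {within `[0, ts], continuous g2}.
  apply: cont_constB; apply: (cont_sub _ Vc) => x /=; rewrite !in_itv /=.
  by move=> /andP[x0 xd]; rewrite x0 (le_trans xd).
have g20 : 0 < g2 0 by rewrite /g2 V0 subr0.
have [tB0 tBts g2tB g2pos _] := first_hit ts0 g2c g20
   (ex_intro _ ts (conj (ltac:(by rewrite ltW //=) : 0 <= ts <= ts)
     (ltac:(by rewrite /g2; clear -Vts; lra) : g2 ts <= 0))).
move: tB0 tBts g2tB g2pos; set tB := fz ts g2 => tB0 tBts g2tB g2pos.
have VtB : v a tB = B by move: g2tB; rewrite /g2 => /eqP; rewrite subr_eq0 => /eqP.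
have tBT : tB <= T by clear -tBts tsT; lra.
have L1 : forall u, 0 <= u <= tB -> theta p * a * u <= v a u.
  move=> u /andP[u0 utB].
  have := mvt_lb Ca (lexx 0) u0 (le_trans utB tBT) (k := theta p * a).
  rewrite V0 !subr0; apply => c /andP[c0 cu]; apply/ltW/wts.
  by rewrite (ltW c0) /=; apply: (lt_le_trans cu); apply: le_trans utB tBts.
have hit : exists t, 0 <= t <= 2 * d /\ dv a t <= 0.
  have [//|nh] := pselect (exists t, 0 <= t <= 2 * d /\ dv a t <= 0).
  exfalso.
  have wpos2 t : 0 <= t <= 2 * d -> 0 < dv a t.
    move=> td; rewrite ltNge; apply/negP => wt; apply: nh; by exists t.
  have mono x y : 0 <= x -> x <= y -> y <= 2 * d -> v a x <= v a y.
    move=> x0 xy y2d; have := mvt_lb Ca x0 xy (le_trans y2d dT) (k := 0).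
    rewrite mul0r => Hq; have : 0 <= v a y - v a x.
      apply: Hq => c /andP[xc cy]; apply/ltW/wpos2.
      by rewrite ltW ?(le_lt_trans x0 xc) //= ltW // (lt_le_trans cy).
    by clear; lra.
  have VgeB u : tB <= u <= 2 * d -> B <= v a u.
    move=> /andP[tBu u2d]; rewrite -VtB; apply: mono => //; exact: ltW.
  have Glow1 : forall u, u \in `]0, d[ -> - (2 + C0) * D u <= G a u.
    move=> u; rewrite in_itv /= => /andP[u0 ud].
    have us1 : 0 < u < s1 by rewrite u0 /=; clear -ud ds1 d0; lra.
    have [v1p hD hD2] := Hdom u us1.
    have uT : 0 <= u <= T by rewrite ltW //=; clear -ud dT1; lra.
    have v1C := Hv1 u uT.
    have Vge : v 1 u <= v a u.
      have [utB|tBu] := leP u tB.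
        apply: (le_trans v1C); apply: (le_trans _ (L1 u _)); last by rewrite ltW.
        by rewrite ler_pM2r // ltW.
      apply: (le_trans v1C); apply: (le_trans _ (VgeB u _)).
        apply: (le_trans _ BC1T); rewrite ler_pM2l; last by clear -C11; lra.
        by case/andP: uT.
      by rewrite ltW //=; clear -ud d0; lra.
    have Vp : 0 < v a u by apply: lt_le_trans Vge.
    have fl := HC0 _ Vp.
    have anti := powR_inv_anti m0 v1p Vge.
    have hp : 0 < h u by apply: hpos; rewrite u0 /=; case/andP: uT.
    have e1 : h u * (- ((v 1 u) `^ m)^-1 - C0) <= h u * f (v a u).
      by rewrite ler_pM2l //; clear -fl anti; lra.
    have E : h u * (- ((v 1 u) `^ m)^-1 - C0) = - (h u * ((v 1 u) `^ m)^-1) - C0 * h u.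
      by ring.
    rewrite E in e1.
    have e2 : C0 * h u <= C0 * D u by rewrite ler_wpM2l.
    rewrite /G /D; move: e1 e2 hD2; rewrite /G /D; clear; lra.
  have Glow2 : forall u, u \in `[d, 2 * d[ -> hm * (B `^ l / 2) <= G a u.
    move=> u; rewrite in_itv /= => /andP[du u2d].
    have Vu : B <= v a u.
      by apply: VgeB; rewrite (ltW u2d) andbT; apply: (le_trans tBts); exact: (le_trans tsd du).
    have [fX _] := HX1 _ (le_trans BX1 Vu).
    have Bl' : B `^ l <= (v a u) `^ l by apply: powR_le; [exact: ltW | exact: ltW | exact: Vu].
    have hm' : hm <= h u by apply: Hhm; rewrite du ltW.
    have f0 : 0 <= f (v a u) by apply: le_trans fX; rewrite divr_ge0 ?powR_ge0.
    rewrite /G; apply: (le_trans (y := hm * f (v a u))); last by rewrite ler_wpM2r.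
    apply: ler_wpM2l; first exact: ltW.
    by clear -fX Bl'; lra.
  have i2d : mu.-integrable [set` `]0, 2 * d[] (EFin \o G a).
    by apply: Hint => //; rewrite dT andbT mulr_ge0 // ltW.
  have sub1 : [set` `]0, d[] `<=` [set` `]0, 2 * d[].
    by apply: subset_itvl; rewrite bnd_simp; clear -d0; lra.
  have sub2 : [set` `[d, 2 * d[] `<=` [set` `]0, 2 * d[].
    by apply: subset_itvr; rewrite bnd_simp.
  have sub3 : [set` `]0, d[] `<=` [set` `]0, s1[].
    by apply: subset_itvl; rewrite bnd_simp; clear -d0 ds1; lra.
  have I1 : - (2 + C0) * Pd <= \int[mu]_(x in [set` `]0, d[]) G a x.
    rewrite /Pd -RZl_itv; last exact: integrableS_itv sub3 iD.
    apply: Rle_itv => //.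
    - exact: integrable_scale (integrableS_itv sub3 iD).
    - exact: integrableS_itv sub1 i2d.
  have I2 : hm * (B `^ l / 2) * d <= \int[mu]_(x in [set` `[d, 2 * d[]) G a x.
    have -> : hm * (B `^ l / 2) * d = \int[mu]_(x in [set` `[d, 2 * d[]) (hm * (B `^ l / 2)).
      by rewrite Rint_cst_itv; [congr (_ * _); ring | clear -d0; lra].
    apply: Rle_itv => //; first exact: int_cst_itv.
    exact: integrableS_itv sub2 i2d.
  have Isplit := Rint_split (ltac:(by []) : 0 < d) (ltac:(by clear -d0; lra) : d <= 2 * d) i2d.
  have K4 : 4 <= hm * d * kap `^ l.
    by move: kapl; rewrite ler_pdivrMr ?mulr_gt0 // mulrC.
  have I2' : 2 * a `^ (p - 1) <= hm * (B `^ l / 2) * d.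
    have -> : hm * (B `^ l / 2) * d = (hm * d * kap `^ l) * a `^ (p - 1) / 2.
      by rewrite Bl; ring.
    have : 4 * a `^ (p - 1) <= (hm * d * kap `^ l) * a `^ (p - 1) by rewrite ler_wpM2r // ltW.
    by clear; lra.
  have := Heq a (2 * d) a0 (ltac:(by rewrite ltW //= mulr_gt0) : 0 <= 2 * d <= T).
  rewrite -/mu => Ephi.
  have : phi_p p (dv a (2 * d)) < 0.
    rewrite Ephi; move: Isplit I1 I2 I2' big Pd0 C00 Cf0.
    rewrite -/mu; clear; move=> Isplit I1 I2 I2' big Pd0 C00 Cf0.
    have : 0 <= C0 * Pd by rewrite mulr_ge0.
    by rewrite Isplit; clear Isplit; lra.
  by move/phi_lt0; rewrite ltNge ltW //; apply: wpos2; rewrite lexx andbT mulr_ge0 // ltW.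
have dva0 : 0 < dv a 0 by apply: lt_trans w0.
have [t [tt wt]] := hit.
have t2T : 0 <= t <= T by case/andP: tt => t0 td; rewrite t0 (le_trans td).
have [M0 MT wM wpos Mle] := first_hit T0 wc dva0 (ex_intro _ t (conj t2T wt)).
split => //; split => //.
have MtB : tB <= fz T (dv a).
  rewrite leNgt; apply/negP => MtB.
  have := wts (fz T (dv a)); rewrite wM ltW //= (lt_le_trans MtB tBts) => /(_ isT).
  by move/(lt_trans tha0); rewrite ltxx.
have := mvt_lb Ca (ltW tB0) MtB MT (k := 0); rewrite mul0r => Hq.
have : 0 <= v a (fz T (dv a)) - v a tB.
  apply: Hq => c /andP[tBc cM]; apply/ltW/wpos.
  by rewrite cM andbT ltW // (lt_trans tB0).
by rewrite VtB; clear -BB'; lra.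
Qed.




Section Main.
Variables (R : realType) (N : nat) (p : R) (f g1 g2 : R -> R)
    (l m beta : R) (K dK : R -> R) (R0 K0 K1 alpha alpha1 : R)
    (v dv : R -> R -> R).
Hypothesis p1 : 1 < p.
Hypothesis pN : p < N%:R.
Hypothesis Hflip : loc_lipschitz_on [set u | u != 0] f.
Hypothesis Hl : p - 1 < l.
Hypothesis H1 : exists U : R, forall u, U < `|u| -> f u = `|u| `^ (l - 1) * u + g1 u.
Hypothesis H1lim : (fun u => `|g1 u| / `|u| `^ l) @ +oo --> (0 : R).
Hypothesis Hg2 : loc_lipschitz_on setT g2.
Hypothesis g20 : g2 0 = 0.
Hypothesis Hm : 0 < m < 1.
Hypothesis H2 : exists2 del : R, 0 < del & forall u, 0 < `|u| < del ->
      f u = - (1 / (`|u| `^ (m - 1) * u)) + g2 u.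
Hypothesis Hb : 0 < beta.
Hypothesis Hfb : f beta = 0.
Hypothesis Hneg : forall u, 0 < u < beta -> f u < 0.
Hypothesis Hpos : forall u, beta < u -> 0 < f u.
Hypothesis R00 : 0 < R0.
Hypothesis Kpos : forall r, R0 <= r -> 0 < K r.
Hypothesis K00 : 0 < K0.
Hypothesis Kb : forall r, R0 <= r -> K0 / r `^ alpha <= K r /\ K r <= K1 / r `^ alpha1.
Hypothesis Hsol : forall a, 0 < a ->
     is_solution N p K f a (R0 `^ ((p - N%:R) / (p - 1))) (v a) (dv a).

Local Notation mu := (@lebesgue_measure R).
Let T := R0 `^ ((p - N%:R) / (p - 1)).
Let h := hfun N p K.
Let G a u := h u * f (v a u).

Lemma T0 : 0 < T.
Proof. by rewrite powR_gt0. Qed.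

Lemma sol_C1 a : 0 < a -> C1_on `[0, T] (v a) (dv a).
Proof. by move=> a0; case: (Hsol a0). Qed.

Lemma sol_v0 a : 0 < a -> v a 0 = 0.
Proof. by move=> a0; case: (Hsol a0) => _ []. Qed.

Lemma sol_dvc a : 0 < a -> {within `[0, T], continuous (dv a)}.
Proof. by move=> a0; case: (sol_C1 a0). Qed.

Lemma sol_int a t : 0 < a -> 0 <= t <= T ->
  mu.-integrable `]0, t[ (EFin \o G a).
Proof.
move=> a0 /andP[t0 tT]; case: (Hsol a0) => _ [_ [HI _]].
have := HI T; rewrite T0 lexx => /(_ isT) iT.
have SUB : [set` `]0, t[] `<=` [set` `]0, T[] by apply: subset_itvl; rewrite bnd_simp.
exact: (@integrableS _ _ _ mu _ _ _ (measurable_itv _) (measurable_itv _) SUB iT).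
Qed.

Lemma sol_eq a t : 0 < a -> 0 <= t <= T ->
  phi_p p (dv a t) = a `^ (p - 1) - \int[mu]_(s in `]0, t[) G a s.
Proof.
move=> a0 tT; case: (Hsol a0) => _ [_ [_ HE]].
by apply: eq_to_real; [exact: sol_int | exact: HE].
Qed.

Lemma dv0 a : 0 < a -> theta p * a < dv a 0.
Proof.
move=> a0; apply: (phi_gt p1); first by rewrite mulr_gt0 ?theta_gt0.
rewrite sol_eq // ?lexx ?ltW ?T0 //.
rewrite set_itv_ge ?bnd_simp ?ltxx // Rintegral_set0 subr0 theta_pow // ?ltW //.
by rewrite ltr_pdivrMr // ltr_pMr ?powR_gt0 // ltr1n.
Qed.


Lemma hpos t : 0 < t <= T -> 0 < h t.
Proof. exact: (h_pos p1 pN R00 Kpos). Qed.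

Lemma ref_bound : exists2 C1 : R, 1 <= C1 &
  forall u, 0 <= u <= T -> dv 1 u <= C1 /\ v 1 u <= C1 * u.
Proof.
have [Cb HCb] := cont_bounded (sol_dvc ltr01).
exists (`|Cb| + 1); first by rewrite lerDr normr_ge0.
have B u : 0 <= u <= T -> dv 1 u <= `|Cb| + 1.
  move=> /HCb H; have := ler_norm (dv 1 u); have := ler_norm Cb; lra.
move=> u uT; split; first exact: B.
have /andP[u0 uT'] := uT.
have := mvt_ub (sol_C1 ltr01) (lexx 0) u0 uT' (k := `|Cb| + 1).
rewrite sol_v0 // !subr0; apply => c /andP[c0 cu]; apply: B.
by rewrite ltW //= (le_trans (ltW cu)).
Qed.

Lemma ref_pos : exists2 sp : R, 0 < sp & sp <= T /\ forall u, 0 < u <= sp -> 0 < v 1 u.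
Proof.
have C := sol_C1 (@ltr01 R).
have d0 : 0 < dv 1 0 by apply: lt_trans (dv0 ltr01); rewrite mulr1 theta_gt0.
have pos_of sp : 0 < sp -> sp <= T -> (forall u, 0 <= u < sp -> 0 < dv 1 u) ->
    forall u, 0 < u <= sp -> 0 < v 1 u.
  move=> sp0 spT H u /andP[u0 usp].
  have [c /andP[c0 cu] E] := mvt_C1 C (lexx 0) u0 (le_trans usp spT).
  move: E; rewrite sol_v0 // !subr0 => ->; rewrite mulr_gt0 //; apply: H.
  by rewrite ltW //= (lt_le_trans cu).
have [[t [tT tn]]|nh] := pselect (exists t, 0 <= t <= T /\ dv 1 t <= 0).
  have [M0 MT _ Mp _] := first_hit T0 (sol_dvc ltr01) d0 (ex_intro _ t (conj tT tn)).
  exists (fz T (dv 1)) => //; split => //; apply: pos_of => //.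
exists T; first exact: T0; split => //.
apply: pos_of => //; first exact: T0.
move=> u /andP[u0 uT]; rewrite ltNge; apply/negP => un; apply: nh.
by exists u; rewrite u0 ltW.
Qed.

Lemma ref_dom : exists C1 s1 : R, [/\ 1 <= C1, 0 < s1, 2 * s1 <= T & 2 * s1 <= 1] /\
  (forall u, 0 <= u <= T -> v 1 u <= C1 * u) /\
  (forall u, 0 < u < s1 -> [/\ 0 < v 1 u, h u <= `|G 1 u| &
       h u * ((v 1 u) `^ m)^-1 <= 2 * `|G 1 u|]).
Proof.
have [C1 C11 HC] := ref_bound.
have [sp sp0 [spT Hsp]] := ref_pos.
have [x0 x00 Hx] := f_small Hg2 g20 Hm H2.
have C10 : 0 < C1 by lra.
have T0' := T0.
exists C1, (Num.min sp (Num.min (x0 / C1) (Num.min (T / 2) (1 / 2)))).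
split; [split => // | split].
- by rewrite !lt_min sp0 divr_gt0 //= divr_gt0 //=; lra.
- have : Num.min sp (Num.min (x0 / C1) (Num.min (T / 2) (1 / 2))) <= T / 2.
    by rewrite !ge_min lexx !orbT.
  lra.
- have : Num.min sp (Num.min (x0 / C1) (Num.min (T / 2) (1 / 2))) <= 1 / 2.
    by rewrite !ge_min lexx !orbT.
  lra.
- by move=> u uT; case: (HC u uT).
move=> u /andP[u0]; rewrite !lt_min => /and4P[usp ux0 uT u1].
have uT' : 0 <= u <= T by rewrite ltW //= ltW // (lt_le_trans uT) // ler_pdivrMr //; lra.
have vp : 0 < v 1 u by apply: Hsp; rewrite u0 ltW.
have vx : v 1 u < x0.
  have [_ vu] := HC u uT'; apply: (le_lt_trans vu).
  by move: ux0; rewrite ltr_pdivlMr // mulrC.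
have [fu _ f2] := Hx (v 1 u) ltac:(by rewrite vp vx).
have hp : 0 < h u by apply: hpos; rewrite u0 (le_trans _ (andP uT').2) // ltW.
have fn : f (v 1 u) <= -1 by lra.
have -> : `|G 1 u| = h u * (- f (v 1 u)).
  by rewrite /G normrM gtr0_norm // ltr0_norm //; lra.
split => //.
- by rewrite ler_pMr //; lra.
- rewrite mulrCA ler_pM2l //; lra.
Qed.

Lemma final_sec : exists a0 : R, exists M : R -> R,
    (forall a, a0 < a ->
       [/\ 0 < M a, M a < T, dv a (M a) = 0 &
           forall t, 0 <= t < M a -> 0 < dv a t]) /\
    M a @[a --> +oo] --> (0 : R) /\
    v a (M a) @[a --> +oo] --> +oo.
Proof.
have [C1 [s1 [[C11 s10 s1T s11] [Hv1 Hdom]]]] := ref_dom.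
have [X1 X10 HX1] := f_big p1 Hl H1 H1lim.
have [C0 C00 HC0] := f_lower Hflip Hg2 g20 Hm H2 Hpos.
have [Cf Cf0 HCf] := f_upper p1 Hflip Hl H1 H1lim Hb Hneg.
have Klb : forall r, R0 <= r -> K0 / r `^ alpha <= K r by move=> r /Kb[].
have hlb := h_lb p1 pN R00 K00 Klb.
have m0 : 0 <= m by case/andP: Hm => /ltW.
have MS d B' := @main_step R p l m f h v dv T C1 s1 C0 Cf X1 p1 Hl m0 T0
   (fun a a0 => sol_C1 a0) (fun a a0 => sol_v0 a0) (fun a t a0 tT => sol_int a0 tT)
   (fun a t a0 tT => sol_eq a0 tT) (fun a a0 => dv0 a0) hpos hlb C00 HC0 Cf0 HCf
   X10 HX1 C11 s10 s1T s11 Hv1 Hdom d B'.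
have T0' := T0.
have FH a t : 0 < a -> 0 <= t <= T -> dv a t <= 0 ->
    [/\ 0 < fz T (dv a), fz T (dv a) <= t, dv a (fz T (dv a)) = 0 &
        forall u, 0 <= u < fz T (dv a) -> 0 < dv a u].
  move=> a0 tT wt.
  have dva0 : 0 < dv a 0 by apply: lt_trans (dv0 a0); rewrite mulr_gt0 ?theta_gt0.
  have [M0 MT wM wpos Mle] := first_hit T0 (sol_dvc a0) dva0 (ex_intro _ t (conj tT wt)).
  by split => //; apply: Mle.
have d00 : 0 < s1 / 2 by rewrite divr_gt0.
have [A0 HA0] := MS (s1 / 2) 1 d00 ltac:(by rewrite mulrC divfK ?gt_eqF).
exists A0, (fun a => fz T (dv a)); split; [|split].
- move=> a aA; have [a0 [[t [tt wt]] _]] := HA0 a aA.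
  have tT : 0 <= t <= T.
    by case/andP: tt => t0 td; rewrite t0 /=; apply: (le_trans td); rewrite mulrC divfK ?gt_eqF //; lra.
  have [M0 Mt wM wpos] := FH a t a0 tT wt.
  split => //; apply: (le_lt_trans Mt); case/andP: tt => _ td.
  apply: (le_lt_trans td); rewrite mulrC divfK ?gt_eqF //; lra.
- apply/cvgrPdist_lt => e e0.
  pose d := Num.min (s1 / 2) (e / 4).
  have d0 : 0 < d by rewrite lt_min d00 divr_gt0.
  have ds1 : 2 * d <= s1.
    have : d <= s1 / 2 by rewrite ge_min lexx.
    lra.
  have [A HA] := MS d 1 d0 ds1.
  exists A; split; first exact: num_real.
  move=> a aA; have [a0 [[t [tt wt]] _]] := HA a aA.
  have tT : 0 <= t <= T.
    by case/andP: tt => t0 td; rewrite t0 /=; apply: (le_trans td); lra.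
  have [M0 Mt _ _] := FH a t a0 tT wt.
  rewrite sub0r normrN gtr0_norm //; apply: (le_lt_trans Mt).
  have : d <= e / 4 by rewrite ge_min lexx orbT.
  case/andP: tt => _ td; lra.
- apply/cvgryPge => B'.
  have [A HA] := MS (s1 / 2) B' d00 ltac:(by rewrite mulrC divfK ?gt_eqF).
  exists A; split; first exact: num_real.
  by move=> a aA; have [_ [_ HB]] := HA a aA.
Qed.

End Main.


Theorem lemma2p5 (R : realType) (N : nat) (p : R) (f g1 g2 : R -> R)
    (l m beta : R) (K dK : R -> R) (R0 K0 K1 alpha alpha1 : R)
    (v dv : R -> R -> R) :
  (2 < N)%N -> 1 < p -> p < N%:R ->
  (* f odd and locally Lipschitz on R \ {0} *)
  (forall u, u != 0 -> f (- u) = - f u) ->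
  loc_lipschitz_on [set u | u != 0] f ->
  (* (H1) *)
  loc_lipschitz_on setT g1 -> p - 1 < l ->
  (exists U : R, forall u, U < `|u| -> f u = `|u| `^ (l - 1) * u + g1 u) ->
  (fun u => `|g1 u| / `|u| `^ l) @ +oo --> (0 : R) ->
  (* (H2) *)
  loc_lipschitz_on setT g2 -> g2 0 = 0 -> 0 < m < 1 ->
  (exists2 del : R, 0 < del & forall u, 0 < `|u| < del ->
      f u = - (1 / (`|u| `^ (m - 1) * u)) + g2 u) ->
  (* (H3) *)
  0 < beta -> f beta = 0 ->
  (forall u, 0 < u -> f u = 0 -> u = beta) ->
  (forall u, 0 < u < beta -> f u < 0) ->
  (forall u, beta < u -> 0 < f u) ->
  (* (H4) *)
  0 < R0 -> C1_on `[R0, +oo[ K dK ->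
  (forall r, R0 <= r -> 0 < K r) ->
  (forall r, R0 <= r -> - ((N%:R - 1) * p / (p - 1)) < r * dK r / K r) ->
  0 < K0 -> 0 < K1 ->
  (forall r, R0 <= r -> K0 / r `^ alpha <= K r /\ K r <= K1 / r `^ alpha1) ->
  N%:R + m * (N%:R - p) / (p - 1) < alpha1 -> alpha1 <= alpha ->
  alpha < 2 * (N%:R - 1) ->
  (* v a is the solution on [0,T], T = R0^((p-N)/(p-1)), with derivative dv a *)
  (forall a, 0 < a ->
     is_solution N p K f a (R0 `^ ((p - N%:R) / (p - 1))) (v a) (dv a)) ->
  exists a0 : R, exists M : R -> R,
    (forall a, a0 < a ->
       [/\ 0 < M a, M a < R0 `^ ((p - N%:R) / (p - 1)), dv a (M a) = 0 &
           forall t, 0 <= t < M a -> 0 < dv a t]) /\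
    M a @[a --> +oo] --> (0 : R) /\
    v a (M a) @[a --> +oo] --> +oo.
Proof.
move=> HN p1 pN fodd Hflip Hg1 Hl H1 H1lim Hg2 g20 Hm H2 Hb Hfb Huniq Hneg Hpos
  R00 HK Kpos HKd K00 K10 Kb Ha1 Haa Ha2 Hsol.
exact: (final_sec p1 pN Hflip Hl H1 H1lim Hg2 g20 Hm H2 Hb Hneg Hpos R00 Kpos K00 Kb Hsol).
Qed.
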